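(* Let $X$ be a $T_1$ space and $\mathcal{P}$ an ideal of closed subsets of $X$. Then every set $Z_\mathcal{P}(f)=\{x\in X\colon f(x)=0\}$ with $f\in C(X)_\mathcal{P}$ is closed in $X$ if and only if $C(X)_\mathcal{P}=C(X)$.
   Context: An ideal of closed subsets of $X$ is a family $\mathcal{P}$ of closed subsets closed under finite unions and under passing to closed subsets. $D_f$ is the set of discontinuity points of $f\in\mathbb{R}^X$; $C(X)_\mathcal{P}=\{f\in\mathbb{R}^X\colon\overline{D_f}\in\mathcal{P}\}$; $C(X)$ is the ring of continuous real-valued functions on $X$. *)

(* Defs.v *)
From HB Require Import structures.
From mathcomp Require Import all_boot all_order all_algebra.
From mathcomp Require Import all_classical all_reals all_analysis.
Set Implicit Arguments. Unset Strict Implicit. Unset Printing Implicit Defensive.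
Import Order.TTheory GRing.Theory Num.Theory.
Import numFieldNormedType.Exports.
Local Open Scope classical_set_scope.
Local Open Scope ring_scope.

Definition closed_ideal (X : topologicalType) (P : set (set X)) : Prop :=
  [/\ (forall A, P A -> closed A),
      P set0,
      (forall A B, P A -> P B -> P (A `|` B)) &
      (forall A B, P A -> closed B -> B `<=` A -> P B)].

Definition discont (X : topologicalType) (R : realType) (f : X -> R) : set X :=
  [set x | ~ {for x, continuous f}].

Definition CP (X : topologicalType) (R : realType) (P : set (set X)) : set (X -> R) :=
  [set f | P (closure (discont f))].

Definition CX (X : topologicalType) (R : realType) : set (X -> R) :=
  [set f | continuous f].

Definition Zset (X : topologicalType) (R : realType) (f : X -> R) : set X :=
  [set x | f x = 0].

(* Main.v *)
Require Import Defs.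
From mathcomp Require Import all_boot all_order all_algebra.
From mathcomp Require Import all_classical all_reals all_analysis.
Import numFieldNormedType.Exports.
Local Open Scope classical_set_scope.

Lemma cont_loc (R : realType) (X : topologicalType) (f : X -> R) x (A : set X) :
  nbhs x A -> (forall y, A y -> f y = f x) -> {for x, continuous f}.
Proof.
move=> HA Hc B HB; apply: filterS HA => y Ay /=; rewrite Hc //.
exact: nbhs_singleton.
Qed.

Theorem theorem2p6 (R : realType) (X : topologicalType) (P : set (set X)) :
  accessible_space X -> closed_ideal P ->
  ((forall f : X -> R, CP P f -> closed (Zset f)) <-> CP P = @CX X R).
Proof.
move=> hT [Pcl P0 PU PS]; split; last first.
  move=> -> f /= fc; rewrite /Zset.
  have -> : [set x | f x = 0%R] = f @^-1` [set 0%R] by [].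
  apply: preimage_closed; first by move=> x _; exact: fc.
  exact: closed_eq.
move=> HZ; apply/seteqP; split => f /=; last first.
  move=> fc; rewrite /CP /=.
  have -> : discont f = set0 by apply/seteqP; split => x //= /(_ (fc x)).
  by rewrite closure0.
move=> Pf x; apply: contrapT => Dx.
have Ax : closure (discont f) x by apply: subset_closure.
have P1 : P [set x].
  have := PS _ _ Pf (@accessible_closed_set1 X hT x). apply.
  by move=> y ->.
pose g := fun y : X => if pselect (y = x) then 1%R else 0%R : R.
have Dg : discont g `<=` [set x].
  move=> y /= Dy; apply: contrapT => yx; apply: Dy.
  apply: (@cont_loc R X g y (~` [set x])).
    apply: open_nbhs_nbhs; split => //.
    by apply: closed_openC; exact: accessible_closed_set1.
  by move=> z zx; rewrite /g; case: pselect => //; case: pselect.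
have Pg : CP P g.
  apply: (PS _ _ P1); first exact: closed_closure.
  by move=> t /(closureS Dg) /(accessible_closed_set1 hT).
have := HZ g Pg.
have -> : Zset g = ~` [set x].
  apply/seteqP; split => y; rewrite /Zset /g /=; case: pselect => //=.
    by move=> _ /eqP; rewrite GRing.oner_eq0.
move=> cC.
have o1 : open [set x] by rewrite -(setCK [set x]); exact: closed_openC.
apply: Dx; apply: (@cont_loc R X f x [set x]).
  exact: open_nbhs_nbhs.
by move=> y ->.
Qed.
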